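(* For generic $a,b\in\mathbb{C}$ define $\mathbf Q_0^{(3)}(n;a;b)=1+\tfrac{3n}{a}$ and, for $k\ge1$, $$a(\tfrac12-k-b)(\tfrac12-k+b)\,\mathbf Q_k^{(3)}(n;a;b)=\frac{3n+2k+a}{2k+a}(n+a)(n+\tfrac12-k-b)(n+\tfrac12-k+b)\,\mathbf Q_{k-1}^{(3)}(n;a+1;b)$$ $$\qquad+8\,\frac{3n-4k+a}{2k+a}\,n\,(n-\tfrac14+\tfrac k2+\tfrac a2+\tfrac b2)(n-\tfrac14+\tfrac k2+\tfrac a2-\tfrac b2)\,\mathbf Q_{k-1}^{(3)}(n-1;a+1;b).$$ Then $\mathbf Q_k^{(3)}$ is a polynomial of degree $1+4k$ in $n$, and for all integers $k\ge0$, near $x=0$, $${}_3F_2\!\left[\begin{matrix}\tfrac13+\tfrac{2k}3+\tfrac a3,\ \tfrac23+\tfrac{2k}3+\tfrac a3,\ 1+\tfrac{2k}3+\tfrac a3\\ \tfrac34+\tfrac k2+\tfrac a2+\tfrac b2,\ \tfrac34+\tfrac k2+\tfrac a2-\tfrac b2\end{matrix}\,\Big|\,-\frac{27x}{(1-4x)^3}\right]$$ $$=(1+8x)^{-1-2k}(1-4x)^{1+2k+a}\sum_{n=0}^\infty\frac{(a)_n(\tfrac12-k-b)_n(\tfrac12-k+b)_n}{n!\,(\tfrac34+\tfrac k2+\tfrac a2+\tfrac b2)_n(\tfrac34+\tfrac k2+\tfrac a2-\tfrac b2)_n}\,\mathbf Q_k^{(3)}(n;a;b)\,x^n.$$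
   Context: $(c)_n$ denotes the Pochhammer symbol, $(c)_0=1$; ${}_pF_q$ is the generalized hypergeometric series. Parameters are generic so that no lower parameter is a nonpositive integer and no division by zero occurs in the recurrence. *)

(* Defs.v *)
From HB Require Import structures.
From mathcomp Require Import all_boot all_order all_algebra.
Set Implicit Arguments. Unset Strict Implicit. Unset Printing Implicit Defensive.
Import Order.TTheory GRing.Theory Num.Theory.
Local Open Scope ring_scope.

Definition poch (F : fieldType) (c : F) (n : nat) : F :=
  \prod_(i < n) (c + i%:R).

Definition gbin (F : fieldType) (c : F) (n : nat) : F :=
  (\prod_(i < n) (c - i%:R)) / (n`!)%:R.

Definition fps (F : fieldType) := nat -> F.

Definition fone (F : fieldType) : fps F := fun n => if n == 0%N then 1 else 0.

Definition fmul (F : fieldType) (f g : fps F) : fps F :=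
  fun n => \sum_(i < n.+1) f i * g (n - i)%N.

Definition fpow (F : fieldType) (g : fps F) (m : nat) : fps F :=
  iter m (fmul g) (@fone F).

(* composition f(g(x)), meaningful when g 0 = 0 *)
Definition fcomp (F : fieldType) (f g : fps F) : fps F :=
  fun n => \sum_(m < n.+1) f m * fpow g m n.

(* the binomial series (1 + d x)^c *)
Definition fbinom (F : fieldType) (c d : F) : fps F :=
  fun n => gbin c n * d ^+ n.

Definition fmonX (F : fieldType) (c : F) : fps F :=
  fun n => if n == 1%N then c else 0.

Definition hyp32 (F : fieldType) (u1 u2 u3 l1 l2 : F) : fps F :=
  fun n => poch u1 n * poch u2 n * poch u3 n
           / (poch l1 n * poch l2 n * (n`!)%:R).

Fixpoint Q3 (F : fieldType) (k : nat) (a b n : F) {struct k} : F :=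
  match k with
  | 0%N => 1 + 3 * n / a
  | k'.+1 =>
    let kk : F := (k'.+1)%:R in
    ((3 * n + 2 * kk + a) / (2 * kk + a) * (n + a)
       * (n + 1/2 - kk - b) * (n + 1/2 - kk + b) * Q3 k' (a + 1) b n
     + 8 * ((3 * n - 4 * kk + a) / (2 * kk + a)) * n
       * (n - 1/4 + kk/2 + a/2 + b/2) * (n - 1/4 + kk/2 + a/2 - b/2)
       * Q3 k' (a + 1) b (n - 1))
    / (a * (1/2 - kk - b) * (1/2 - kk + b))
  end.

(* Main.v *)
Require Import Defs.
From HB Require Import structures.
From mathcomp Require Import all_boot all_order all_algebra.
From mathcomp Require Import ring zify.
From Stdlib Require Import FunctionalExtensionality.
Import Order.TTheory GRing.Theory Num.Theory.
Set Implicit Arguments. Unset Strict Implicit. Unset Printing Implicit Defensive.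
Local Open Scope ring_scope.

Section Fps.
Variable F : fieldType.
Local Notation ps := (fps F).
Implicit Types f g h : ps.

Definition sadd (f g : ps) : ps := fun n => f n + g n.
Definition sscale (c : F) (f : ps) : ps := fun n => c * f n.
Definition mulX (f : ps) : ps := fun n => if n is m.+1 then f m else 0.
Definition th (f : ps) : ps := fun n => n%:R * f n.
Definition p1 (d : F) (f : ps) : ps := sadd f (sscale d (mulX f)).
Definition szero : ps := fun _ => 0.

Definition tp (n : nat) (f : ps) : {poly F} := \poly_(i < n.+1) f i.

Lemma fmul_tp n f g : fmul f g n = (tp n f * tp n g)`_n.
Proof.
rewrite coefM /fmul; apply: eq_bigr => i _.
rewrite /tp !coef_poly ltnS leq_ord ltnS leq_subr //.
Qed.

Lemma coefM_ext n (p p' q : {poly F}) :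
  (forall i, (i <= n)%N -> p`_i = p'`_i) -> (p * q)`_n = (p' * q)`_n.
Proof.
move=> h; rewrite !coefM; apply: eq_bigr => i _; rewrite h //.
by rewrite -ltnS.
Qed.

Lemma coefM_ext2 n (p p' q q' : {poly F}) :
  (forall i, (i <= n)%N -> p`_i = p'`_i) ->
  (forall i, (i <= n)%N -> q`_i = q'`_i) -> (p * q)`_n = (p' * q')`_n.
Proof.
move=> h h'; rewrite !coefM; apply: eq_bigr => i _; rewrite h ?h' //.
  exact: leq_subr.
by rewrite -ltnS.
Qed.

Lemma fmulC f g : fmul f g = fmul g f.
Proof. apply: functional_extensionality => n; by rewrite !fmul_tp mulrC. Qed.

Lemma tp_fmul n f g i : (i <= n)%N -> (tp n (fmul f g))`_i = (tp n f * tp n g)`_i.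
Proof.
move=> hi.
have e : forall (h : ps), (tp i h) = \poly_(j < i.+1) (tp n h)`_j.
  move=> h; apply/polyP => j; rewrite /tp !coef_poly.
  case: ltnP => // hj; rewrite ltnS.
  by rewrite (leq_trans (_ : j <= i)%N) // -ltnS.
have -> : (tp n (fmul f g))`_i = fmul f g i by rewrite /tp coef_poly ltnS hi.
rewrite fmul_tp (e f) (e g).
rewrite (coefM_ext2 (p' := tp n f) (q' := tp n g)) // => j hj;
  by rewrite coef_poly ltnS hj.
Qed.

Lemma fmulA f g h : fmul f (fmul g h) = fmul (fmul f g) h.
Proof.
apply: functional_extensionality => n.
rewrite !fmul_tp (coefM_ext2 (p' := tp n f) (q' := tp n g * tp n h)) //;
  last by move=> i hi; exact: tp_fmul.
rewrite [RHS](coefM_ext2 (p' := tp n f * tp n g) (q' := tp n h)) //;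
  last by move=> i hi; exact: tp_fmul.
by rewrite mulrA.
Qed.

Lemma fmul_sadd f g h : fmul f (sadd g h) = sadd (fmul f g) (fmul f h).
Proof.
apply: functional_extensionality => n; rewrite /fmul /sadd -big_split /=.
by apply: eq_bigr => i _; rewrite mulrDr.
Qed.

Lemma fmul_sscale f c g : fmul f (sscale c g) = sscale c (fmul f g).
Proof.
apply: functional_extensionality => n; rewrite /fmul /sscale mulr_sumr.
by apply: eq_bigr => i _; rewrite mulrCA.
Qed.

Lemma fmul_mulX f g : fmul f (mulX g) = mulX (fmul f g).
Proof.
apply: functional_extensionality => n; rewrite /fmul /mulX.
case: n => [|n]; first by rewrite big_ord1 subnn mulr0.
rewrite big_ord_recr /= subnn mulr0 addr0.
apply: eq_bigr => i _; rewrite subSn //; exact: leq_ord.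
Qed.

Lemma fmul1 f : fmul (@fone F) f = f.
Proof.
apply: functional_extensionality => n; rewrite /fmul big_ord_recl /= /fone /=.
rewrite mul1r subn0 big1 ?addr0 // => i _; by rewrite mul0r.
Qed.

Lemma fmul_p1 f d g : fmul f (p1 d g) = p1 d (fmul f g).
Proof. by rewrite /p1 fmul_sadd fmul_sscale fmul_mulX. Qed.

Lemma th_fmul f g : th (fmul f g) = sadd (fmul (th f) g) (fmul f (th g)).
Proof.
apply: functional_extensionality => n; rewrite /th /fmul /sadd -big_split /=.
rewrite mulr_sumr; apply: eq_bigr => i _.
have hi : (i <= n)%N by rewrite -ltnS.
by rewrite -{1}(subnKC hi) natrD; ring.
Qed.

Lemma th_mulX f : th (mulX f) = sadd (mulX (th f)) (mulX f).
Proof.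
apply: functional_extensionality => n; rewrite /th /mulX /sadd.
case: n => [|n]; first by rewrite mulr0 addr0.
by rewrite -addn1 natrD; ring.
Qed.

Lemma th_sadd f g : th (sadd f g) = sadd (th f) (th g).
Proof. apply: functional_extensionality => n; rewrite /th /sadd; ring. Qed.
Lemma th_sscale c f : th (sscale c f) = sscale c (th f).
Proof. apply: functional_extensionality => n; rewrite /th /sscale; ring. Qed.
Lemma th_p1 d f : th (p1 d f) = sadd (p1 d (th f)) (sscale d (mulX f)).
Proof.
rewrite /p1 th_sadd th_sscale th_mulX.
apply: functional_extensionality => n; rewrite /th /sadd /sscale; ring.
Qed.

End Fps.

Section Bin.
Variable F : fieldType.
Hypothesis hchar : [pchar F] =i pred0.
Local Notation ps := (fps F).
Implicit Types f g h Y Z : ps.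
Implicit Types c d e : F.

Lemma natS_neq0 n : n.+1%:R != 0 :> F.
Proof. by rewrite ((pcharf0P F).1 hchar). Qed.

Lemma fact_neq0 n : (n`!)%:R != 0 :> F.
Proof. by rewrite ((pcharf0P F).1 hchar) -lt0n fact_gt0. Qed.

Definition BinEq c d Y := p1 d (th Y) = sscale (c*d) (mulX Y).

Lemma gbin0 c : gbin c 0 = 1.
Proof. by rewrite /gbin big_ord0 fact0 divr1. Qed.

Lemma gbinS c n : gbin c n.+1 * n.+1%:R = gbin c n * (c - n%:R).
Proof.
rewrite /gbin big_ord_recr /= factS natrM.
have h1 := natS_neq0 n; have h2 := fact_neq0 n.
field; by rewrite h2 -mulrS h1.
Qed.

Lemma fbinom_eq c d : BinEq c d (fbinom c d).
Proof.
apply: functional_extensionality => n; rewrite /p1 /sadd /sscale /th /mulX /fbinom.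
case: n => [|n]; first by rewrite mul0r !mulr0 addr0.
rewrite exprS mulrA (mulrC _%:R) gbinS; ring.
Qed.

Lemma BinEq_uniq c d Y Z : BinEq c d Y -> BinEq c d Z -> Y 0%N = Z 0%N -> Y = Z.
Proof.
move=> hY hZ h0; apply: functional_extensionality => n.
elim: n => // n IH.
have eY := congr1 (fun u => u n.+1) hY; have eZ := congr1 (fun u => u n.+1) hZ.
move: eY eZ; rewrite /p1 /sadd /sscale /th /mulX /= IH => eY eZ.
have hn := natS_neq0 n.
apply: (mulIf hn); rewrite mulrC (mulrC (Z n.+1)).
apply: (addIr (d * (n%:R * Z n))); by rewrite eY eZ.
Qed.

Lemma p1_sadd d f g : p1 d (sadd f g) = sadd (p1 d f) (p1 d g).
Proof. apply: functional_extensionality => n; rewrite /p1 /sadd /sscale /mulX; case: n => *; ring. Qed.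
Lemma p1_sscale d c f : p1 d (sscale c f) = sscale c (p1 d f).
Proof. apply: functional_extensionality => n; rewrite /p1 /sadd /sscale /mulX; case: n => *; ring. Qed.
Lemma p1_mulX d f : p1 d (mulX f) = mulX (p1 d f).
Proof. apply: functional_extensionality => n; rewrite /p1 /sadd /sscale /mulX; case: n => *; ring. Qed.
Lemma mulX_sadd f g : mulX (sadd f g) = sadd (mulX f) (mulX g).
Proof. apply: functional_extensionality => n; rewrite /sadd /mulX; case: n => *; ring. Qed.
Lemma mulX_sscale c f : mulX (sscale c f) = sscale c (mulX f).
Proof. apply: functional_extensionality => n; rewrite /sscale /mulX; case: n => *; ring. Qed.
Lemma fmul_p1l d f g : fmul (p1 d f) g = p1 d (fmul f g).
Proof. by rewrite fmulC fmul_p1 fmulC. Qed.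
Lemma fmul_saddl f g h : fmul (sadd f g) h = sadd (fmul f h) (fmul g h).
Proof. by rewrite fmulC fmul_sadd !(fmulC h). Qed.
Lemma fmul_sscalel c f g : fmul (sscale c f) g = sscale c (fmul f g).
Proof. by rewrite fmulC fmul_sscale fmulC. Qed.
Lemma fmul_mulXl f g : fmul (mulX f) g = mulX (fmul f g).
Proof. by rewrite fmulC fmul_mulX fmulC. Qed.

Lemma BinEq_mul c e d Y Z : BinEq c d Y -> BinEq e d Z -> BinEq (c+e) d (fmul Y Z).
Proof.
rewrite /BinEq => hY hZ.
rewrite th_fmul p1_sadd -fmul_p1l hY -fmul_p1 hZ fmul_sscalel fmul_sscale.
rewrite fmul_mulXl fmul_mulX.
apply: functional_extensionality => n; rewrite /sadd /sscale; ring.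
Qed.

Lemma fbinom0n c d : fbinom c d 0%N = 1.
Proof. by rewrite /fbinom gbin0 expr0 mulr1. Qed.

Lemma fbinom_add c e d : fmul (fbinom c d) (fbinom e d) = fbinom (c+e) d.
Proof.
apply: (BinEq_uniq (c := c + e) (d := d)).
- apply: BinEq_mul; exact: fbinom_eq.
- exact: fbinom_eq.
by rewrite /fmul big_ord1 /fbinom !gbin0 !expr0 !mulr1.
Qed.

Lemma fbinom_0 d : fbinom 0 d = @fone F.
Proof.
apply: (BinEq_uniq (c := 0) (d := d)).
- exact: fbinom_eq.
- apply: functional_extensionality => n; rewrite /p1 /sadd /sscale /th /mulX /fone.
  case: n => [|[|n]] /=; ring.
by rewrite /fbinom gbin0 expr0 mulr1.
Qed.

Lemma fbinom_1 d : fbinom 1 d = p1 d (@fone F).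
Proof.
apply: (BinEq_uniq (c := 1) (d := d)).
- exact: fbinom_eq.
- apply: functional_extensionality => n; rewrite /p1 /sadd /sscale /th /mulX /fone.
  case: n => [|[|[|n]]] /=; ring.
by rewrite /fbinom gbin0 expr0 mulr1 /p1 /sadd /sscale /mulX /fone /= mulr0 addr0.
Qed.

Lemma fmul_fbinom1 d f : fmul (fbinom 1 d) f = p1 d f.
Proof. by rewrite fbinom_1 fmul_p1l fmul1. Qed.

Lemma p1_fbinom c d : p1 d (fbinom c d) = fbinom (c+1) d.
Proof. by rewrite -fmul_fbinom1 fbinom_add addrC. Qed.

Lemma p1_inj d f g : p1 d f = p1 d g -> f = g.
Proof.
move=> h.
have e : forall Y, fmul (fbinom (-1) d) (p1 d Y) = Y.
  by move=> Y; rewrite fmul_p1 -fmul_p1l p1_fbinom addNr fbinom_0 fmul1.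
by rewrite -(e f) h e.
Qed.

Lemma th_fbinom c d : th (fbinom c d) = sscale (c*d) (mulX (fbinom (c-1) d)).
Proof.
apply: (p1_inj (d := d)); rewrite fbinom_eq.
by rewrite p1_sscale p1_mulX p1_fbinom subrK.
Qed.

Lemma fbinom_p1 c d f : fmul (fbinom (c+1) d) f = p1 d (fmul (fbinom c d) f).
Proof. by rewrite -p1_fbinom fmul_p1l. Qed.

Variable g : ps.
Hypothesis hg0 : g 0%N = 0.

Lemma fpowS m : fpow g m.+1 = fmul g (fpow g m).
Proof. by []. Qed.

Lemma fpow_small m n : (n < m)%N -> fpow g m n = 0.
Proof.
elim: m n => // m IH n hn; rewrite fpowS /fmul big1 // => i _.
case: i => [[|i] hi] /=; first by rewrite hg0 mul0r.
by rewrite IH ?mulr0 //; lia.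
Qed.

Definition LC (K : nat) (f : ps) : ps := fun n => \sum_(m < K) f m * fpow g m n.

Lemma fcomp_LC K f n : (n < K)%N -> fcomp f g n = LC K f n.
Proof.
move=> hK; rewrite /fcomp /LC -(subnKC hK) big_split_ord /=.
rewrite [X in _ = _ + X]big1 ?addr0 // => i _.
by rewrite -fpowS fpow_small ?mulr0 // ltnS leq_addr.
Qed.

Lemma fmul_dep h Y Z n : (forall i, (i <= n)%N -> Y i = Z i) -> fmul h Y n = fmul h Z n.
Proof. move=> e; apply: eq_bigr => i _; by rewrite e // leq_subr. Qed.

Lemma fmul_sum h K (c : nat -> F) (S : nat -> ps) :
  fmul h (fun n => \sum_(m < K) c m * S m n) = fun n => \sum_(m < K) c m * fmul h (S m) n.
Proof.
apply: functional_extensionality => n; rewrite /fmul.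
under eq_bigr do rewrite mulr_sumr.
rewrite exchange_big /=; apply: eq_bigr => m _; rewrite mulr_sumr.
by apply: eq_bigr => i _; rewrite mulrCA.
Qed.

Lemma fcomp_sadd f f' : fcomp (sadd f f') g = sadd (fcomp f g) (fcomp f' g).
Proof.
apply: functional_extensionality => n; rewrite /fcomp /sadd -big_split /=.
by apply: eq_bigr => i _; rewrite mulrDl.
Qed.

Lemma fcomp_sscale c f : fcomp (sscale c f) g = sscale c (fcomp f g).
Proof.
apply: functional_extensionality => n; rewrite /fcomp /sscale mulr_sumr.
by apply: eq_bigr => i _; rewrite mulrA.
Qed.

Lemma fcomp_mulX f : fcomp (mulX f) g = fmul g (fcomp f g).
Proof.
apply: functional_extensionality => n.
rewrite (@fmul_dep g (fcomp f g) (LC n.+1 f) n); last by move=> i hi; apply: fcomp_LC; rewrite ltnS.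
rewrite /LC fmul_sum /fcomp big_ord_recl /= mul0r add0r big_ord_recr /=.
rewrite -fpowS fpow_small ?mulr0 ?addr0 //.
Qed.

Lemma th_fpow m : fmul g (th (fpow g m)) = sscale m%:R (fmul (th g) (fpow g m)).
Proof.
elim: m => [|m IH].
  apply: functional_extensionality => n; rewrite /sscale mul0r /fpow /= /fmul big1 // => i _.
  rewrite /th /fone; case: (n - i)%N => [|k] /=; by rewrite !(mul0r, mulr0).
rewrite fpowS th_fmul fmul_sadd IH fmul_sscale (fmulA g (th g)) (fmulC g (th g)) -fmulA.
apply: functional_extensionality => n; rewrite /sadd /sscale mulrSr; ring.
Qed.

Lemma chain f : fmul g (th (fcomp f g)) = fmul (th g) (fcomp (th f) g).
Proof.
apply: functional_extensionality => n.
rewrite (@fmul_dep g _ (fun i => \sum_(m < n.+1) f m * th (fpow g m) i) n); last first.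
  move=> i hi; rewrite /th (fcomp_LC (K := n.+1)) ?ltnS // /LC mulr_sumr.
  by apply: eq_bigr => m _; rewrite mulrCA.
rewrite (@fmul_dep (th g) (fcomp (th f) g) (LC n.+1 (th f)) n); last by move=> i hi; apply: fcomp_LC; rewrite ltnS.
rewrite /LC (fmul_sum g n.+1 f (fun m => th (fpow g m))) fmul_sum; apply: eq_bigr => m _.
by rewrite th_fpow /sscale /th mulrA (mulrC (f m)).
Qed.

Lemma fcomp0 f : fcomp f g 0%N = f 0%N.
Proof. by rewrite /fcomp big_ord1 /= /fone /= mulr1. Qed.

End Bin.

Tactic Notation "pw" ident(n) := apply: functional_extensionality => n; rewrite /p1 /sadd /sscale /mulX /th.

Section Comp.
Variable F : fieldType.
Hypothesis hchar : [pchar F] =i pred0.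
Local Notation ps := (fps F).
Implicit Types f g h Y Z : ps.
Implicit Types c d e : F.

Lemma natr_neq0 n : (0 < n)%N -> n%:R != 0 :> F.
Proof. by rewrite ((pcharf0P F).1 hchar) -lt0n. Qed.

Definition gg : ps := fmul (fmonX (-27)) (fbinom (-3) (-4)).

Lemma fmonX_mul c f : fmul (fmonX c) f = sscale c (mulX f).
Proof.
have -> : fmonX c = sscale c (mulX (@fone F)).
  pw x; rewrite /fmonX /fone; case: x => [|[|n]] /=; ring.
by rewrite fmul_sscalel fmul_mulXl fmul1.
Qed.

Lemma gg_eq : gg = sscale (-27) (mulX (fbinom (-3) (-4))).
Proof. by rewrite /gg fmonX_mul. Qed.

Lemma gg0 : gg 0%N = 0.
Proof. by rewrite gg_eq /sscale /mulX mulr0. Qed.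

Lemma th_gg : p1 (-4) (th gg) = p1 8 gg.
Proof.
rewrite gg_eq th_sscale th_mulX th_fbinom //.
have -> : fbinom (-3) (-4) = p1 (-4) (fbinom (-3 - 1) (-4)) :> ps.
  by rewrite p1_fbinom // subrK.
set Y := fbinom _ _.
pw x; case: x => [|[|[|n]]] /=; ring.
Qed.

Lemma mulX_inj f f' : mulX f = mulX f' -> f = f'.
Proof. move=> h; pw x; exact: (congr1 (fun u => u x.+1) h). Qed.

Lemma sscale_inj c f f' : c != 0 -> sscale c f = sscale c f' -> f = f'.
Proof.
move=> hc h; pw x; have := congr1 (fun u => u x) h; rewrite /sscale.
by move/(mulfI hc).
Qed.

Lemma fmul_fbinom_inj c d f f' : fmul (fbinom c d) f = fmul (fbinom c d) f' -> f = f'.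
Proof.
move=> h; have := congr1 (fmul (fbinom (-c) d)) h.
by rewrite !fmulA fbinom_add // addNr fbinom_0 // !fmul1.
Qed.

Lemma n27 : (-27 : F) != 0.
Proof. by rewrite oppr_eq0 natr_neq0. Qed.

Lemma cancel_gg f f' : fmul gg f = fmul gg f' -> f = f'.
Proof.
rewrite gg_eq !fmul_sscalel !fmul_mulXl => /(sscale_inj n27) /mulX_inj.
exact: fmul_fbinom_inj.
Qed.

Lemma CH f : p1 (-4) (th (fcomp f gg)) = p1 8 (fcomp (th f) gg).
Proof.
apply: cancel_gg.
rewrite fmul_p1 chain ?gg0 // -fmul_p1l th_gg fmul_p1l fmul_p1 //.
Qed.

Lemma poch_shift c m : poch (c+1) m * c = poch c m * (c + m%:R).
Proof.
have h1 : poch c m.+1 = c * poch (c+1) m.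
  rewrite /poch big_ord_recl /= addr0; congr (_ * _); apply: eq_bigr => i _.
  rewrite /bump /= natrD; ring.
have h2 : poch c m.+1 = poch c m * (c + m%:R) by rewrite /poch big_ord_recr.
by rewrite mulrC -h1 h2.
Qed.

Lemma hyp32_contig c u2 u3 l1 l2 : c != 0 ->
  hyp32 (c+1) u2 u3 l1 l2 =
  sadd (hyp32 c u2 u3 l1 l2) (sscale c^-1 (th (hyp32 c u2 u3 l1 l2))).
Proof.
move=> hc; pw x; rewrite /hyp32.
have -> : poch (c + 1) x = poch c x * (c + x%:R) / c.
  by rewrite -poch_shift mulfK.
set Di := (poch l1 x * poch l2 x * (x`!)%:R)^-1.
by field.
Qed.

Lemma Lstep c u2 u3 l1 l2 : c != 0 ->
  p1 8 (fcomp (hyp32 (c+1) u2 u3 l1 l2) gg) =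
  sadd (p1 8 (fcomp (hyp32 c u2 u3 l1 l2) gg))
       (sscale c^-1 (p1 (-4) (th (fcomp (hyp32 c u2 u3 l1 l2) gg)))).
Proof.
move=> hc; rewrite hyp32_contig // fcomp_sadd ?gg0 // fcomp_sscale ?gg0 //.
by rewrite CH p1_sadd p1_sscale.
Qed.

End Comp.

Section NF.
Variable F : fieldType.
Hypothesis hchar : [pchar F] =i pred0.
Local Notation ps := (fps F).
Implicit Types f g h X Y Z S T : ps.

Definition XT T (i : nat) : ps := iter i (@mulX F) T.

Definition nf (c : nat -> F -> F) T : ps :=
  fun n => \sum_(i < n.+1) c i n%:R * XT T i n.

Lemma XT_small T i n : (n < i)%N -> XT T i n = 0.
Proof.
elim: i n => // i IH [|n] h /=; first by [].
by rewrite IH.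
Qed.

Lemma nf_th c T : th (nf c T) = nf (fun i x => x * c i x) T.
Proof.
apply: functional_extensionality => n; rewrite /th /nf mulr_sumr.
by apply: eq_bigr => i _; rewrite mulrA.
Qed.

Lemma nf_X c T : mulX (nf c T) = nf (fun i x => if i is j.+1 then c j (x - 1) else 0) T.
Proof.
apply: functional_extensionality => n; rewrite /mulX /nf.
case: n => [|n]; first by rewrite big_ord1 /= mul0r.
rewrite [RHS]big_ord_recl /= mul0r add0r; apply: eq_bigr => i _.
by rewrite mulrS addrC addrK.
Qed.

Lemma nf_add c c' T : sadd (nf c T) (nf c' T) = nf (fun i x => c i x + c' i x) T.
Proof.
apply: functional_extensionality => n; rewrite /sadd /nf -big_split /=.
by apply: eq_bigr => i _; rewrite mulrDl.
Qed.

Lemma nf_scale a c T : sscale a (nf c T) = nf (fun i x => a * c i x) T.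
Proof.
apply: functional_extensionality => n; rewrite /sscale /nf mulr_sumr.
by apply: eq_bigr => i _; rewrite mulrA.
Qed.

Lemma nf_T T : T = nf (fun i _ => if i is 0%N then 1 else 0) T.
Proof.
apply: functional_extensionality => n; rewrite /nf big_ord_recl /= mul1r.
by rewrite big1 ?addr0 // => i _; rewrite mul0r.
Qed.

Lemma nf_ext c c' T : (forall i x, c i x = c' i x) -> nf c T = nf c' T.
Proof.
move=> h; apply: functional_extensionality => n; rewrite /nf.
by apply: eq_bigr => i _; rewrite h.
Qed.


Lemma nf_p1 d c T : p1 d (nf c T) =
  nf (fun i x => c i x + (if i is j.+1 then d * c j (x - 1) else 0)) T.
Proof.
rewrite /p1 nf_X nf_scale nf_add; apply: nf_ext => i x; case: i => [|i] /=; by rewrite ?mulr0.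
Qed.

Definition c0 : nat -> F -> F := fun i _ => if i is 0%N then 1 else 0.

Definition Unext (j A : F) U : ps :=
  sadd (sadd (p1 8 (p1 (-4) (th U))) (sscale (8*j) (mulX (p1 (-4) U))))
       (sscale (-4*A) (mulX (p1 8 U))).

Definition p8 (k : nat) (U : ps) := iter k (p1 8) U.
Definition m4 (U : ps) := p1 (-4) (p1 (-4) (p1 (-4) U)).

Variables A be : F.
Definition s1 := A - 1/2.
Definition s2 := (A/2 - 1/4) * (A/2 - 1/4) - 1/4 * be^+2.
Definition q2 := A + 1.
Definition q1 := (3 * A^+2 + 6 * A + 2) / 9.
Definition q0 := A * (A + 1) * (A + 2) / 27.
Definition rs := A + 1.
Definition r2 := A + 1/4 - be^+2.
Definition r3 := A * (1/4 - be^+2).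

Definition Pop T := sadd (th (th (th T))) (sadd (sscale s1 (th (th T))) (sscale s2 (th T))).
Definition Qop T := sadd (th (th (th T))) (sadd (sscale q2 (th (th T)))
                      (sadd (sscale q1 (th T)) (sscale q0 T))).
Definition Qpop T := sadd (th (th (th T))) (sadd (sscale rs (th (th T)))
                      (sadd (sscale r2 (th T)) (sscale r3 T))).

Definition U1 T := Unext 0 A T.
Definition U2 T := Unext (-2) A (U1 T).
Definition U3 T := Unext (-4) A (U2 T).

Definition VP T := sadd (U3 T) (sadd (sscale s1 (p8 2 (U2 T))) (sscale s2 (p8 4 (U1 T)))).
Definition VQ T := sadd (U3 T) (sadd (sscale q2 (p8 2 (U2 T)))
        (sadd (sscale q1 (p8 4 (U1 T))) (sscale q0 (p8 6 T)))).
Definition Wop T := sadd (m4 (VP T)) (sscale 27 (mulX (VQ T))).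
Definition Eop T := sadd (Pop T) (sscale (-1) (mulX (Qpop T))).

Definition cU1 : nat -> F -> F := fun i x => match i with
  | 0%N => (1 * x)
  | 1%N => (- 4) + (- 4 * A) + (4 * x)
  | 2%N => (64) + (- 32 * A) + (- 32 * x)
  | _ => 0 end.

Definition cU2 : nat -> F -> F := fun i x => match i with
  | 0%N => (1 * x^+2)
  | 1%N => (20) + (4 * A) + (- 28 * x) + (- 8 * x * A) + (8 * x^+2)
  | 2%N => (- 96) + (176 * A) + (16 * A^+2) + (144 * x) + (- 96 * x * A) + (- 48 * x^+2)
  | 3%N => (- (2^+7 * 3^+3)) + (128 * A) + (256 * A^+2) + ((2^+7 * 3^+1 * 5) * x) + (- 256 * x^+2)
  | 4%N => (2^+14) + (- 2^+13 * A) + (2^+10 * A^+2) + (- 2^+13 * x) + (2^+11 * x * A) + (2^+10 * x^+2)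
  | _ => 0 end.

Definition cU3 : nat -> F -> F := fun i x => match i with
  | 0%N => (1 * x^+3)
  | 1%N => (- 36) + (- 4 * A) + (96 * x) + (12 * x * A) + (- 72 * x^+2) + (- 12 * x^+2 * A) + (12 * x^+3)
  | 2%N => (- (2^+5 * 3^+1 * 13)) + (- 784 * A) + (- 48 * A^+2) + (816 * x) + (816 * x * A) + (48 * x * A^+2) + (- 192 * x^+2 * A) + (- 48 * x^+3)
  | 3%N => ((2^+7 * 3^+5)) + (- (2^+6 * 3^+1 * 43) * A) + (- (2^+8 * 3^+2) * A^+2) + (- 64 * A^+3) + (- (2^+6 * 3^+2 * 49) * x) + ((2^+7 * 3^+3) * x * A) + (960 * x * A^+2) + ((2^+7 * 3^+2 * 7) * x^+2) + (- 192 * x^+2 * A) + (- 704 * x^+3)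
  | 4%N => ((2^+11 * 3^+2 * 5)) + ((2^+9 * 209) * A) + (- (2^+11 * 3^+2) * A^+2) + (- (2^+9 * 3^+1) * A^+3) + (- (2^+9 * 3^+1 * 7) * x) + (- (2^+10 * 3^+1 * 19) * x * A) + ((2^+9 * 3^+2) * x * A^+2) + (- (2^+10 * 3^+2) * x^+2) + ((2^+9 * 3^+1 * 5) * x^+2 * A) + ((2^+9 * 3^+1) * x^+3)
  | 5%N => (- (2^+12 * 3^+1 * 205)) + ((2^+15 * 17) * A) + ((2^+14 * 3^+1) * A^+2) + (- (2^+12 * 3^+1) * A^+3) + ((2^+13 * 3^+1 * 53) * x) + (- (2^+13 * 3^+1 * 7) * x * A) + (- (2^+12 * 3^+1) * x * A^+2) + (- (2^+13 * 3^+3) * x^+2) + ((2^+12 * 3^+1) * x^+2 * A) + ((2^+12 * 3^+1) * x^+3)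
  | 6%N => ((2^+18 * 3^+3)) + (- (2^+17 * 3^+3) * A) + ((2^+16 * 3^+2) * A^+2) + (- 2^+15 * A^+3) + (- (2^+17 * 3^+3) * x) + ((2^+17 * 3^+2) * x * A) + (- (2^+15 * 3^+1) * x * A^+2) + ((2^+16 * 3^+2) * x^+2) + (- (2^+15 * 3^+1) * x^+2 * A) + (- 2^+15 * x^+3)
  | _ => 0 end.

Definition cVP : nat -> F -> F := fun i x => match i with
  | 0%N => ((1 / 16) * x) + (- (1 / 4) * x * be^+2) + (- (1 / 4) * x * A) + ((1 / 4) * x * A^+2) + (- (1 / 2) * x^+2) + (1 * x^+2 * A) + (1 * x^+3)
  | 1%N => (- (225 / 4)) + (9 * be^+2) + ((155 / 4) * A) + (1 * A * be^+2) + (- 4 * A^+2) + (- 1 * A^+3) + ((513 / 4) * x) + (- 9 * x * be^+2) + (- 53 * x * A) + (1 * x * A^+2) + (- 84 * x^+2) + (12 * x^+2 * A) + (12 * x^+3)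
  | 2%N => (- (2^+2 * 3^+3 * 17)) + (240 * be^+2) + (318 * A) + (40 * A * be^+2) + (112 * A^+2) + (- 24 * A^+3) + ((2^+1 * 3^+1 * 209) * x) + (- 120 * x * be^+2) + (- 8 * x * A) + (- 56 * x * A^+2) + (- 72 * x^+2) + (- 48 * x^+2 * A) + (- 48 * x^+3)
  | 3%N => ((2^+5 * 3^+1 * 325)) + ((2^+7 * 3^+1 * 5) * be^+2) + (- (2^+5 * 329) * A) + (640 * A * be^+2) + ((2^+7 * 3^+1 * 5) * A^+2) + (- 192 * A^+3) + (- (2^+5 * 907) * x) + (- 640 * x * be^+2) + ((2^+7 * 3^+2 * 5) * x * A) + (- 448 * x * A^+2) + ((2^+7 * 65) * x^+2) + (- 704 * x^+2 * A) + (- 704 * x^+3)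
  | 4%N => ((2^+14 * 3^+2)) + (- (2^+8 * 53) * A) + ((2^+10 * 5) * A * be^+2) + (2^+10 * A^+2) + (- 512 * A^+3) + (- (2^+12 * 3^+2) * x) + (- 2^+12 * x * A) + (512 * x * A^+2) + (- (2^+11 * 3^+1) * x^+2) + ((2^+9 * 3^+1) * x^+2 * A) + ((2^+9 * 3^+1) * x^+3)
  | 5%N => (- (2^+10 * 3^+2 * 265)) + (- (2^+12 * 3^+1 * 5) * be^+2) + ((2^+10 * 3^+1 * 145) * A) + ((2^+12 * 5) * A * be^+2) + (- (2^+13 * 5) * A^+2) + ((2^+10 * 3^+1 * 419) * x) + ((2^+12 * 3^+1) * x * be^+2) + (- (2^+12 * 37) * x * A) + (2^+13 * x * A^+2) + (- (2^+13 * 3^+3) * x^+2) + ((2^+12 * 3^+1) * x^+2 * A) + ((2^+12 * 3^+1) * x^+3)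
  | 6%N => ((2^+14 * 3^+1 * 121)) + (- (2^+16 * 3^+1) * be^+2) + (- (2^+13 * 121) * A) + (2^+15 * A * be^+2) + (- (2^+13 * 385) * x) + (2^+15 * x * be^+2) + ((2^+15 * 11) * x * A) + ((2^+15 * 17) * x^+2) + (- 2^+15 * x^+2 * A) + (- 2^+15 * x^+3)
  | _ => 0 end.

Definition cVQ : nat -> F -> F := fun i x => match i with
  | 0%N => ((2 / 27) * A) + ((1 / 9) * A^+2) + ((1 / 27) * A^+3) + ((2 / 9) * x) + ((2 / 3) * x * A) + ((1 / 3) * x * A^+2) + (1 * x^+2) + (1 * x^+2 * A) + (1 * x^+3)
  | 1%N => (- 8) + ((44 / 3) * A) + (- (16 / 3) * A^+2) + ((4 / 9) * A^+3) + (44 * x) + (- 32 * x * A) + (4 * x * A^+2) + (- 48 * x^+2) + (12 * x^+2 * A) + (12 * x^+3)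
  | 2%N => (- ((2^+6 * 19) / 3)) + ((320 / 9) * A) + (16 * A^+2) + (- (16 / 9) * A^+3) + ((320 / 3) * x) + (96 * x * A) + (- 16 * x * A^+2) + (144 * x^+2) + (- 48 * x^+2 * A) + (- 48 * x^+3)
  | 3%N => (((2^+8 * 331) / 3)) + (- ((2^+6 * (3 * 1000 + 619)) / 27) * A) + (((2^+7 * 59) / 9) * A^+2) + (- (704 / 27) * A^+3) + (- ((2^+6 * (3 * 1000 + 619)) / 9) * x) + (((2^+8 * 59) / 3) * x * A) + (- (704 / 3) * x * A^+2) + ((2^+7 * 59) * x^+2) + (- 704 * x^+2 * A) + (- 704 * x^+3)
  | 4%N => (- (2^+11 * 3^+2)) + ((2^+9 * 3^+3) * A) + (- ((2^+10 * 5) / 3) * A^+2) + ((512 / 9) * A^+3) + ((2^+9 * 3^+4) * x) + (- (2^+11 * 5) * x * A) + (512 * x * A^+2) + (- (2^+10 * 3^+1 * 5) * x^+2) + ((2^+9 * 3^+1) * x^+2 * A) + ((2^+9 * 3^+1) * x^+3)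
  | 5%N => (- ((2^+12 * (1 * 1000 + 895)) / 3)) + (((2^+14 * 241) / 9) * A) + (- (2^+13 * 3^+1) * A^+2) + ((2^+12 / 9) * A^+3) + (((2^+14 * 241) / 3) * x) + (- (2^+14 * 3^+2) * x * A) + (2^+12 * x * A^+2) + (- (2^+13 * 3^+3) * x^+2) + ((2^+12 * 3^+1) * x^+2 * A) + ((2^+12 * 3^+1) * x^+3)
  | 6%N => (((2^+19 * 55) / 3)) + (- ((2^+17 * 299) / 27) * A) + (((2^+17 * 5) / 9) * A^+2) + (- (2^+15 / 27) * A^+3) + (- ((2^+17 * 299) / 9) * x) + (((2^+18 * 5) / 3) * x * A) + (- (2^+15 / 3) * x * A^+2) + ((2^+17 * 5) * x^+2) + (- 2^+15 * x^+2 * A) + (- 2^+15 * x^+3)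
  | _ => 0 end.

Definition cW : nat -> F -> F := fun i x => match i with
  | 0%N => ((1 / 16) * x) + (- (1 / 4) * x * be^+2) + (- (1 / 4) * x * A) + ((1 / 4) * x * A^+2) + (- (1 / 2) * x^+2) + (1 * x^+2 * A) + (1 * x^+3)
  | 1%N => (- (87 / 2)) + (6 * be^+2) + ((139 / 4) * A) + (1 * A * be^+2) + (- 7 * A^+2) + ((225 / 2) * x) + (- 6 * x * be^+2) + (- 62 * x * A) + (7 * x * A^+2) + (- 96 * x^+2) + (27 * x^+2 * A) + (27 * x^+3)
  | 2%N => (- (2^+2 * 3^+2 * 55)) + (48 * be^+2) + (873 * A) + (28 * A * be^+2) + (- 104 * A^+2) + ((2^+1 * 3^+1 * 449) * x) + (- 24 * x * be^+2) + (- 800 * x * A) + (52 * x * A^+2) + (- (2^+2 * 3^+1 * 101) * x^+2) + (180 * x^+2 * A) + (180 * x^+3)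
  | 3%N => ((2^+5 * 3^+2 * 91)) + (- (2^+7 * 3^+2) * be^+2) + (- (2^+2 * (2 * 1000 + 41)) * A) + (208 * A * be^+2) + (528 * A^+2) + (- (2^+4 * 3^+1 * 533) * x) + (384 * x * be^+2) + ((2^+6 * 85) * x * A) + (- 176 * x * A^+2) + ((2^+5 * 3^+2 * 29) * x^+2) + (- 912 * x^+2 * A) + (- 912 * x^+3)
  | 4%N => ((2^+6 * 3^+1 * (4 * 1000 + 637))) + (- (2^+8 * 3^+1 * 13) * be^+2) + (- (2^+4 * (13 * 1000 + 61)) * A) + (- 704 * A * be^+2) + ((2^+9 * 25) * A^+2) + (- (2^+4 * 3^+3 * (1 * 1000 + 477)) * x) + ((2^+6 * 3^+1 * 13) * x * be^+2) + ((2^+6 * (1 * 1000 + 573)) * x * A) + (- (2^+7 * 25) * x * A^+2) + ((2^+6 * 3^+1 * 793) * x^+2) + (- (2^+6 * 3^+3 * 7) * x^+2 * A) + (- (2^+6 * 3^+3 * 7) * x^+3)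
  | 5%N => (- (2^+7 * 3^+2 * 145)) + ((2^+9 * 3^+1 * 35) * be^+2) + ((2^+7 * 3^+1 * 115) * A) + (- (2^+9 * 25) * A * be^+2) + ((2^+11 * 5) * A^+2) + ((2^+7 * 3^+1 * 467) * x) + (- (2^+9 * 3^+1 * 7) * x * be^+2) + (- (2^+9 * 61) * x * A) + (- 2^+11 * x * A^+2) + (- (2^+10 * 3^+1 * 17) * x^+2) + ((2^+9 * 3^+2) * x^+2 * A) + ((2^+9 * 3^+2) * x^+3)
  | 6%N => (- (2^+12 * 3^+3 * 569)) + ((2^+14 * 3^+3) * be^+2) + ((2^+11 * (4 * 1000 + 921)) * A) + (- 2^+13 * A * be^+2) + (- (2^+17 * 3^+1) * A^+2) + ((2^+11 * 3^+4 * 185) * x) + (- (2^+13 * 3^+2) * x * be^+2) + (- (2^+13 * 403) * x * A) + (2^+16 * x * A^+2) + (- (2^+13 * 3^+1 * 203) * x^+2) + ((2^+13 * 3^+1 * 11) * x^+2 * A) + ((2^+13 * 3^+1 * 11) * x^+3)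
  | 7%N => (- (2^+14 * 3^+1 * 385)) + (- (2^+16 * 3^+1 * 7) * be^+2) + ((2^+17 * 17) * A) + (2^+18 * A * be^+2) + (- (2^+16 * 7) * A^+2) + ((2^+14 * 3^+2 * 37) * x) + ((2^+16 * 3^+1) * x * be^+2) + (- (2^+16 * 5) * x * A) + (2^+16 * x * A^+2) + (- (2^+17 * 3^+1) * x^+2)
  | 8%N => ((2^+19 * 3^+3 * 89)) + (- (2^+21 * 3^+1) * be^+2) + (- (2^+16 * 3^+1 * 779) * A) + (2^+18 * A * be^+2) + (2^+22 * A^+2) + (- (2^+16 * 3^+1 * (2 * 1000 + 369)) * x) + ((2^+18 * 3^+1) * x * be^+2) + ((2^+18 * 145) * x * A) + (- 2^+19 * x * A^+2) + ((2^+18 * 3^+1 * 73) * x^+2) + (- (2^+18 * 3^+2) * x^+2 * A) + (- (2^+18 * 3^+2) * x^+3)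
  | 9%N => (- (2^+19 * 3^+2 * 289)) + ((2^+21 * 3^+2) * be^+2) + ((2^+19 * 289) * A) + (- 2^+21 * A * be^+2) + ((2^+19 * 901) * x) + (- 2^+21 * x * be^+2) + (- (2^+21 * 17) * x * A) + (- (2^+22 * 13) * x^+2) + (2^+21 * x^+2 * A) + (2^+21 * x^+3)
  | _ => 0 end.

Definition cE : nat -> F -> F := fun i x => match i with
  | 0%N => ((1 / 16) * x) + (- (1 / 4) * x * be^+2) + (- (1 / 4) * x * A) + ((1 / 4) * x * A^+2) + (- (1 / 2) * x^+2) + (1 * x^+2 * A) + (1 * x^+3)
  | 1%N => ((1 / 4)) + (- 1 * be^+2) + (- (1 / 4) * A) + (1 * A * be^+2) + (- (5 / 4) * x) + (1 * x * be^+2) + (1 * x * A) + (2 * x^+2) + (- 1 * x^+2 * A) + (- 1 * x^+3)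
  | _ => 0 end.

Definition cP8E : nat -> F -> F := fun i x => match i with
  | 0%N => ((1 / 16) * x) + (- (1 / 4) * x * be^+2) + (- (1 / 4) * x * A) + ((1 / 4) * x * A^+2) + (- (1 / 2) * x^+2) + (1 * x^+2 * A) + (1 * x^+3)
  | 1%N => (- (249 / 4)) + (9 * be^+2) + ((199 / 4) * A) + (1 * A * be^+2) + (- 10 * A^+2) + ((645 / 4) * x) + (- 9 * x * be^+2) + (- 89 * x * A) + (10 * x * A^+2) + (- 138 * x^+2) + (39 * x^+2 * A) + (39 * x^+3)
  | 2%N => (- (2^+2 * 3^+2 * 175)) + (240 * be^+2) + ((2^+1 * 3^+2 * 155) * A) + (40 * A * be^+2) + (- 320 * A^+2) + ((2^+1 * 3^+1 * (1 * 1000 + 445)) * x) + (- 120 * x * be^+2) + (- (2^+3 * 325) * x * A) + (160 * x * A^+2) + (- (2^+3 * 3^+2 * 55) * x^+2) + (600 * x^+2 * A) + (600 * x^+3)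
  | 3%N => (- (2^+5 * 3^+1 * (1 * 1000 + 565))) + ((2^+7 * 3^+1 * 5) * be^+2) + ((2^+5 * (1 * 1000 + 435)) * A) + (640 * A * be^+2) + (- (2^+8 * 3^+1 * 5) * A^+2) + ((2^+5 * (4 * 1000 + 385)) * x) + (- 640 * x * be^+2) + (- (2^+7 * 3^+2 * 25) * x * A) + ((2^+8 * 5) * x * A^+2) + (- (2^+9 * 85) * x^+2) + ((2^+7 * 35) * x^+2 * A) + ((2^+7 * 35) * x^+3)
  | 4%N => (- (2^+14 * 3^+1 * 25)) + ((2^+8 * (1 * 1000 + 115)) * A) + ((2^+10 * 5) * A * be^+2) + (- (2^+12 * 5) * A^+2) + ((2^+13 * 3^+1 * 35) * x) + (- (2^+11 * 65) * x * A) + ((2^+10 * 5) * x * A^+2) + (- (2^+10 * 3^+1 * 65) * x^+2) + ((2^+10 * 3^+1 * 5) * x^+2 * A) + ((2^+10 * 3^+1 * 5) * x^+3)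
  | 5%N => (- (2^+10 * 3^+2 * 265)) + (- (2^+12 * 3^+1 * 5) * be^+2) + ((2^+10 * 3^+1 * 145) * A) + ((2^+12 * 5) * A * be^+2) + (- (2^+13 * 5) * A^+2) + ((2^+10 * 3^+1 * 419) * x) + ((2^+12 * 3^+1) * x * be^+2) + (- (2^+12 * 37) * x * A) + (2^+13 * x * A^+2) + (- (2^+13 * 3^+3) * x^+2) + ((2^+12 * 3^+1) * x^+2 * A) + ((2^+12 * 3^+1) * x^+3)
  | 6%N => ((2^+14 * 3^+1 * 121)) + (- (2^+16 * 3^+1) * be^+2) + (- (2^+13 * 121) * A) + (2^+15 * A * be^+2) + (- (2^+13 * 385) * x) + (2^+15 * x * be^+2) + ((2^+15 * 11) * x * A) + ((2^+15 * 17) * x^+2) + (- 2^+15 * x^+2 * A) + (- 2^+15 * x^+3)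
  | _ => 0 end.


Lemma natr_nz n : (0 < n)%N -> (n%:R : F) != 0.
Proof. by rewrite ((pcharf0P F).1 hchar) -lt0n. Qed.

Ltac nfsimp := do 12 rewrite ?nf_th ?nf_X ?nf_p1 ?nf_add ?nf_scale.
Ltac nfz := rewrite /s1 /s2 /q2 /q1 /q0 /rs /r2 /r3; field;
  repeat (apply/andP; split); rewrite ?expf_neq0 ?natr_nz //.

Lemma nfT T : T = nf c0 T.
Proof. exact: nf_T. Qed.

Lemma U1_nf T : U1 T = nf cU1 T.
Proof.
rewrite /U1 /Unext [in LHS](nfT T); nfsimp.
apply: nf_ext => i x; do 4 (try case: i => [|i]); rewrite /=; nfz.
Qed.

Lemma U2_nf T : U2 T = nf cU2 T.
Proof.
rewrite /U2 U1_nf /Unext; nfsimp.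
apply: nf_ext => i x; do 6 (try case: i => [|i]); rewrite /=; nfz.
Qed.

Lemma U3_nf T : U3 T = nf cU3 T.
Proof.
rewrite /U3 U2_nf /Unext; nfsimp.
apply: nf_ext => i x; do 8 (try case: i => [|i]); rewrite /=; nfz.
Qed.

End NF.

Section NF2.
Variable F : fieldType.
Hypothesis hchar : [pchar F] =i pred0.
Local Notation ps := (fps F).
Implicit Types T : ps.
Variables A be : F.

Ltac nfsimp := do 12 rewrite ?nf_th ?nf_X ?nf_p1 ?nf_add ?nf_scale.
Ltac nfz := rewrite /s1 /s2 /q2 /q1 /q0 /rs /r2 /r3; field;
  repeat (apply/andP; split); rewrite ?expf_neq0 ?natr_nz //.

Lemma VP_nf T : VP A be T = nf (cVP A be) T.
Proof.
rewrite /VP U3_nf // U2_nf // U1_nf // /p8 /=; nfsimp.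
apply: nf_ext => i x; do 8 (try case: i => [|i]); rewrite /=; nfz.
Qed.

Lemma VQ_nf T : VQ A T = nf (cVQ A) T.
Proof.
rewrite /VQ U3_nf // U2_nf // U1_nf // /p8 /=.
rewrite [in p1 8 (p1 8 (p1 8 (p1 8 (p1 8 (p1 8 T)))))](nfT T); nfsimp.
apply: nf_ext => i x; do 8 (try case: i => [|i]); rewrite /=; nfz.
Qed.

Lemma W_nf T : Wop A be T = nf (cW A be) T.
Proof.
rewrite /Wop VP_nf VQ_nf /m4; nfsimp.
apply: nf_ext => i x; do 11 (try case: i => [|i]); rewrite /=; nfz.
Qed.

Lemma E_nf T : Eop A be T = nf (cE A be) T.
Proof.
rewrite /Eop /Pop /Qpop [in LHS](nfT T); nfsimp.
apply: nf_ext => i x; do 3 (try case: i => [|i]); rewrite /=; nfz.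
Qed.

Lemma P8E_nf T : p8 5 (nf (cE A be) T) = nf (cP8E A be) T.
Proof.
rewrite /p8 /=; nfsimp.
apply: nf_ext => i x; do 8 (try case: i => [|i]); rewrite /=; nfz.
Qed.

Lemma TG_nf T : m4 (nf (cP8E A be) T) = nf (cW A be) T.
Proof.
rewrite /m4; nfsimp.
apply: nf_ext => i x; do 11 (try case: i => [|i]); rewrite /=; nfz.
Qed.

Lemma W_ident T : Wop A be T = m4 (p8 5 (Eop A be T)).
Proof. by rewrite W_nf E_nf P8E_nf TG_nf. Qed.

End NF2.

Section Rstep.
Variable F : fieldType.
Hypothesis hchar : [pchar F] =i pred0.
Local Notation ps := (fps F).
Implicit Types f g h X Y Z S T : ps.
Implicit Types c d e : F.

Lemma LM1 d X Y : fmul (p1 d X) Y = fmul X (p1 d Y).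
Proof. by rewrite fmul_p1l fmul_p1. Qed.
Lemma LM2 d X Y : p1 d (fmul X Y) = fmul X (p1 d Y).
Proof. by rewrite fmul_p1. Qed.
Lemma LM3 c X Y : fmul (sscale c (mulX X)) Y = fmul X (sscale c (mulX Y)).
Proof. by rewrite fmul_sscalel fmul_mulXl fmul_sscale fmul_mulX. Qed.
Lemma LM4 c X Y : sscale c (fmul X Y) = fmul X (sscale c Y).
Proof. by rewrite fmul_sscale. Qed.
Lemma LM5 X Y Y' : sadd (fmul X Y) (fmul X Y') = fmul X (sadd Y Y').
Proof. by rewrite fmul_sadd. Qed.

Lemma LM6 X Y : mulX (fmul X Y) = fmul X (mulX Y).
Proof. by rewrite fmul_mulX. Qed.

Lemma Rstep e (f0 : F) c S T : c != 0 ->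
  p1 (-4) S = sadd (p1 8 (p1 8 T)) (sscale c^-1
     (sadd (sadd (sscale (8*e) (mulX (p1 (-4) T))) (sscale (-4*f0) (mulX (p1 8 T))))
           (p1 8 (p1 (-4) (th T))))) ->
  p1 8 (fmul (fbinom (e-2) 8) (fmul (fbinom (f0+1) (-4)) S)) =
  sadd (p1 8 (fmul (fbinom e 8) (fmul (fbinom f0 (-4)) T)))
       (sscale c^-1 (p1 (-4) (th (fmul (fbinom e 8) (fmul (fbinom f0 (-4)) T))))).
Proof.
move=> hc hST.
set P := fbinom (e-1) 8; set Q := fbinom (f0-1) (-4).
have hBe : fbinom e 8 = p1 8 P by rewrite /P p1_fbinom // subrK.
have hBe2 : P = p1 8 (fbinom (e-2) 8).
  by rewrite /P p1_fbinom //; congr fbinom; ring.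
have hBf : fbinom f0 (-4) = p1 (-4) Q by rewrite /Q p1_fbinom // subrK.
have hBf1 : fbinom (f0+1) (-4) = p1 (-4) (p1 (-4) Q).
  by rewrite !p1_fbinom //; congr fbinom; ring.
have thBe : th (fbinom e 8) = sscale (e*8) (mulX P) by rewrite th_fbinom.
have thBf : th (fbinom f0 (-4)) = sscale (f0 * -4) (mulX Q) by rewrite th_fbinom.
rewrite th_fmul th_fmul thBe thBf.
rewrite hBe hBf hBf1 -fmul_p1l -hBe2.
do 12 rewrite ?LM1 ?LM2 ?LM3 ?LM4 ?LM5 ?LM6.
congr (fmul P (fmul Q _)); rewrite hST.
pw n; case: n => [|[|[|n]]] /=; rewrite ?mulrS; ring.
Qed.
End Rstep.

Section Bailey.
Variable F : fieldType.
Hypothesis hchar : [pchar F] =i pred0.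
Local Notation ps := (fps F).
Local Notation g := (gg F).
Implicit Types X Y Z T : ps.
Variables A be : F.
Hypothesis hl1 : forall m : nat, 3/4 + A/2 + be/2 + m%:R != 0.
Hypothesis hl2 : forall m : nat, 3/4 + A/2 - be/2 + m%:R != 0.

Lemma poch_nz (l : F) : (forall m : nat, l + m%:R != 0) -> forall n, poch l n != 0.
Proof. move=> h n; rewrite /poch; apply/prodf_neq0 => i _; exact: h. Qed.

Lemma pochS (c : F) n : poch c n.+1 = poch c n * (c + n%:R).
Proof. by rewrite /poch big_ord_recr. Qed.

Definition Fh : ps := hyp32 (A/3) ((A+1)/3) ((A+2)/3) (3/4 + A/2 + be/2) (3/4 + A/2 - be/2).

Definition sig : ps := fun n => poch A n * poch (1/2 - be) n * poch (1/2 + be) n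
   / ((n`!)%:R * poch (3/4 + A/2 + be/2) n * poch (3/4 + A/2 - be/2) n).

Lemma n2 : (2:F) != 0. Proof. by apply: (natr_nz hchar). Qed.
Lemma n3 : (3:F) != 0. Proof. by apply: (natr_nz hchar). Qed.
Lemma n4 : (4:F) != 0. Proof. by apply: (natr_nz hchar). Qed.

Lemma nz_by (x y c : F) : c != 0 -> x = c * y -> y != 0 -> x != 0.
Proof. by move=> hc -> hy; rewrite mulf_neq0. Qed.

Ltac numnz := rewrite ?natr_nz //.
Ltac nzs hs := repeat (apply/andP; split); rewrite ?hs ?(natr_nz hchar) //.

Lemma Fh_rec : Pop A be Fh = mulX (Qop A Fh).
Proof.
rewrite /Pop /Qop; pw n; case: n => [|m]; first by rewrite /=; ring.
rewrite /= /Fh /hyp32 !pochS factS natrM.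
have h1 := poch_nz hl1 m; have h2 := poch_nz hl2 m.
have h3 := hl1 m; have h4 := hl2 m.
have h5 : (m`!)%:R != 0 :> F by apply: (natr_nz hchar); exact: fact_gt0.
have h6 : (m.+1)%:R != 0 :> F by apply: (natr_nz hchar).
move: h6; rewrite mulrSr => h6.
rewrite /s1 /s2 /q2 /q1 /q0.
field.
repeat (apply/andP; split); rewrite ?h1 ?h2 ?h5 ?h6 ?(natr_nz hchar) //.
  apply: (nz_by (c := 16) _ _ h4); first by rewrite (natr_nz hchar).
  by field; rewrite ?(natr_nz hchar).
apply: (nz_by (c := 16) _ _ h3); first by rewrite (natr_nz hchar).
by field; rewrite ?(natr_nz hchar).
Qed.


Lemma sig_rec : Pop A be sig = mulX (Qpop A be sig).
Proof.
rewrite /Pop /Qpop; pw n; case: n => [|m]; first by rewrite /=; ring.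
rewrite /= /sig !pochS factS natrM.
have h1 := poch_nz hl1 m; have h2 := poch_nz hl2 m.
have h3 := hl1 m; have h4 := hl2 m.
have h5 : (m`!)%:R != 0 :> F by apply: (natr_nz hchar); exact: fact_gt0.
have h6 : (m.+1)%:R != 0 :> F by apply: (natr_nz hchar).
move: h6; rewrite mulrSr => h6.
rewrite /s1 /s2 /rs /r2 /r3.
field.
repeat (apply/andP; split); rewrite ?h1 ?h2 ?h5 ?h6 ?(natr_nz hchar) //.
  apply: (nz_by (c := 16) _ _ h4); first by rewrite (natr_nz hchar).
  by field; rewrite ?(natr_nz hchar).
apply: (nz_by (c := 16) _ _ h3); first by rewrite (natr_nz hchar).
by field; rewrite ?(natr_nz hchar).
Qed.

Lemma Eop_sig : Eop A be sig = szero F.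
Proof.
have h := sig_rec; rewrite /Eop h; pw n; rewrite /szero; ring.
Qed.

Definition G0 := fcomp Fh g.
Definition G1 := fcomp (th Fh) g.
Definition G2 := fcomp (th (th Fh)) g.
Definition G3 := fcomp (th (th (th Fh))) g.

Lemma m4_gg Y : m4 (fmul g Y) = sscale (-27) (mulX Y).
Proof.
rewrite /m4 gg_eq fmul_sscalel fmul_mulXl !p1_sscale !p1_mulX.
rewrite -!fbinom_p1 //.
have -> : (-3 + 1 + 1 + 1 : F) = 0 by ring.
by rewrite fbinom_0 // fmul1.
Qed.

Lemma EqG : sadd (m4 (sadd G3 (sadd (sscale (s1 A) G2) (sscale (s2 A be) G1))))
  (sscale 27 (mulX (sadd G3 (sadd (sscale (q2 A) G2) (sadd (sscale (q1 A) G1) (sscale (q0 A) G0))))))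
  = szero F.
Proof.
have h : fcomp (Pop A be Fh) g = fcomp (mulX (Qop A Fh)) g by rewrite Fh_rec.
rewrite /Pop /Qop fcomp_mulX ?gg0 // in h.
rewrite !fcomp_sadd !fcomp_sscale in h.
rewrite /G0 /G1 /G2 /G3 h m4_gg; pw n; rewrite /szero; case: n => [|n] /=; ring.
Qed.


Definition Bm (e : F) U := fmul (fbinom e 8) (fmul (fbinom A (-4)) U).

Lemma Bm_p1 e d U : p1 d (Bm e U) = Bm e (p1 d U).
Proof. by rewrite /Bm !fmul_p1. Qed.
Lemma Bm_sscale e c U : sscale c (Bm e U) = Bm e (sscale c U).
Proof. by rewrite /Bm !fmul_sscale. Qed.
Lemma Bm_sadd e U V : sadd (Bm e U) (Bm e V) = Bm e (sadd U V).
Proof. by rewrite /Bm !fmul_sadd. Qed.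
Lemma Bm_mulX e U : mulX (Bm e U) = Bm e (mulX U).
Proof. by rewrite /Bm !fmul_mulX. Qed.
Lemma Bm_shift c U : Bm (c+1) U = Bm c (p1 8 U).
Proof. by rewrite /Bm fbinom_p1 // Bm_p1. Qed.
Lemma Bm_zero e : Bm e (szero F) = szero F.
Proof.
rewrite /Bm; have z : forall X, fmul X (szero F) = szero F.
  move=> X; pw n; rewrite /fmul /szero big1 // => i _; by rewrite mulr0.
by rewrite !z.
Qed.

Lemma Rrel e U : p1 (-4) (th (Bm e U)) = p1 8 (Bm (e-2) (Unext e A U)).
Proof.
set P := fbinom (e-2) 8; set Q := fbinom (A-1) (-4).
have hBe1 : fbinom (e-1) 8 = p1 8 P.
  by rewrite /P p1_fbinom //; congr fbinom; ring.
have hBe : fbinom e 8 = p1 8 (p1 8 P).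
  by rewrite /P !p1_fbinom //; congr fbinom; ring.
have hBA : fbinom A (-4) = p1 (-4) Q by rewrite /Q p1_fbinom // subrK.
have thBe : th (fbinom e 8) = sscale (e*8) (mulX (fbinom (e-1) 8)) by rewrite th_fbinom.
have thBA : th (fbinom A (-4)) = sscale (A * -4) (mulX Q) by rewrite th_fbinom.
rewrite /Bm th_fmul th_fmul thBe thBA hBe1 hBe hBA.
do 12 rewrite ?LM1 ?LM2 ?LM3 ?LM4 ?LM5 ?LM6.
congr (fmul P (fmul Q _)); rewrite /Unext.
pw n; case: n => [|[|[|n]]] /=; rewrite ?mulrS; ring.
Qed.

Definition R0 := Bm 0 sig.
Definition R1 := Bm (-2) (U1 A sig).
Definition R2 := Bm (-4) (U2 A sig).
Definition R3 := Bm (-6) (U3 A sig).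

Lemma rel1 : p1 8 R1 = p1 (-4) (th R0).
Proof. by rewrite /R1 /R0 Rrel sub0r. Qed.
Lemma rel2 : p1 8 R2 = p1 (-4) (th R1).
Proof. by rewrite /R2 /R1 Rrel; have -> : (-2 - 2 : F) = -4 by ring. Qed.
Lemma rel3 : p1 8 R3 = p1 (-4) (th R2).
Proof. by rewrite /R3 /R2 Rrel; have -> : (-4 - 2 : F) = -6 by ring. Qed.

Definition Lop (X0 X1 X2 X3 : ps) :=
  sadd (m4 (sadd X3 (sadd (sscale (s1 A) X2) (sscale (s2 A be) X1))))
       (sscale 27 (mulX (sadd X3 (sadd (sscale (q2 A) X2) (sadd (sscale (q1 A) X1) (sscale (q0 A) X0)))))).

Lemma p1_zero d : p1 d (szero F) = szero F.
Proof. pw n; rewrite /szero; case: n => *; ring. Qed.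

Lemma EqR : Lop R0 R1 R2 R3 = szero F.
Proof.
have e0 : R0 = Bm (-6) (p8 6 sig).
  rewrite /R0; have -> : (0:F) = -6 + 1 + 1 + 1 + 1 + 1 + 1 by ring.
  by rewrite !Bm_shift.
have e1 : R1 = Bm (-6) (p8 4 (U1 A sig)).
  rewrite /R1; have -> : (-2:F) = -6 + 1 + 1 + 1 + 1 by ring.
  by rewrite !Bm_shift.
have e2 : R2 = Bm (-6) (p8 2 (U2 A sig)).
  rewrite /R2; have -> : (-4:F) = -6 + 1 + 1 by ring.
  by rewrite !Bm_shift.
rewrite /Lop e0 e1 e2 /R3 /m4.
do 12 rewrite ?Bm_p1 ?Bm_sscale ?Bm_sadd ?Bm_mulX.
change (Bm (-6) (Wop A be sig) = szero F).
rewrite (W_ident hchar) Eop_sig /m4 /p8 /= !p1_zero.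
exact: Bm_zero.
Qed.


Lemma Lop_lin X0 X1 X2 X3 Y0 Y1 Y2 Y3 :
  Lop (sadd X0 (sscale (-1) Y0)) (sadd X1 (sscale (-1) Y1)) (sadd X2 (sscale (-1) Y2))
      (sadd X3 (sscale (-1) Y3)) = sadd (Lop X0 X1 X2 X3) (sscale (-1) (Lop Y0 Y1 Y2 Y3)).
Proof. rewrite /Lop /m4; pw n; case: n => [|[|[|[|n]]]] /=; ring. Qed.

Definition vz (Y : ps) n := forall i, (i < n)%N -> Y i = 0.

Lemma vz_mulX Y n : vz Y n -> vz (mulX Y) n /\ mulX Y n = 0.
Proof.
move=> h; split.
  move=> [|i] hi //=; apply: h; exact: ltnW.
by case: n h => [|n] h //=; apply: h.
Qed.

Lemma vz_p1 d Y n : vz Y n -> vz (p1 d Y) n /\ p1 d Y n = Y n.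
Proof.
move=> h; have [h1 h2] := vz_mulX h; split.
  by move=> i hi; rewrite /p1 /sadd /sscale h // h1 // mulr0 addr0.
by rewrite /p1 /sadd /sscale h2 mulr0 addr0.
Qed.

Lemma vz_sadd X Y n : vz X n -> vz Y n -> vz (sadd X Y) n.
Proof. by move=> h1 h2 i hi; rewrite /sadd h1 // h2 // addr0. Qed.
Lemma vz_sscale c X n : vz X n -> vz (sscale c X) n.
Proof. by move=> h i hi; rewrite /sscale h // mulr0. Qed.

Lemma vanish_step X Y n : p1 8 Y = p1 (-4) (th X) -> vz X n -> vz Y n /\ Y n = n%:R * X n.
Proof.
move=> h hX.
have key : forall i, p1 8 Y i = p1 (-4) (th X) i by move=> i; rewrite h.
have hY : vz Y n.
  elim=> [|i IH] hi.
    by have := key 0%N; rewrite /p1 /sadd /sscale /mulX /th mulr0 addr0 mul0r mulr0 addr0.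
  have := key i.+1; rewrite /p1 /sadd /sscale /mulX /th /=.
  rewrite IH ?(ltnW hi) // hX // hX ?(ltnW hi) //.
  by rewrite !mulr0 addr0 => ->; rewrite addr0.
split => //; case: n hX hY => [|m] hX hY.
  by have := key 0%N; rewrite /p1 /sadd /sscale /mulX /th !mulr0 !addr0.
have := key m.+1; rewrite /p1 /sadd /sscale /mulX /th /=.
by rewrite (hY m) // (hX m) // !mulr0 !addr0.
Qed.

Lemma EqG' : Lop G0 G1 G2 G3 = szero F.
Proof. exact: EqG. Qed.

Definition D0 := sadd G0 (sscale (-1) R0).
Definition D1 := sadd G1 (sscale (-1) R1).
Definition D2 := sadd G2 (sscale (-1) R2).
Definition D3 := sadd G3 (sscale (-1) R3).

Lemma relD X0 X1 Y0 Y1 : p1 8 X1 = p1 (-4) (th X0) -> p1 8 Y1 = p1 (-4) (th Y0) ->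
  p1 8 (sadd X1 (sscale (-1) Y1)) = p1 (-4) (th (sadd X0 (sscale (-1) Y0))).
Proof. by move=> h1 h2; rewrite th_sadd th_sscale !p1_sadd !p1_sscale h1 h2. Qed.

Lemma relG1 : p1 8 G1 = p1 (-4) (th G0). Proof. by rewrite /G1 /G0 CH. Qed.
Lemma relG2 : p1 8 G2 = p1 (-4) (th G1). Proof. by rewrite /G2 /G1 CH. Qed.
Lemma relG3 : p1 8 G3 = p1 (-4) (th G2). Proof. by rewrite /G3 /G2 CH. Qed.

Lemma Pnz m : ((m.+1)%:R ^+ 3 + s1 A * (m.+1)%:R ^+ 2 + s2 A be * (m.+1)%:R : F) != 0.
Proof.
have -> : ((m.+1)%:R ^+ 3 + s1 A * (m.+1)%:R ^+ 2 + s2 A be * (m.+1)%:R : F) =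
   (m.+1)%:R * (3/4 + A/2 + be/2 + m%:R) * (3/4 + A/2 - be/2 + m%:R).
  rewrite /s1 /s2 mulrSr; field; by rewrite ?(natr_nz hchar).
by rewrite !mulf_neq0 // (natr_nz hchar).
Qed.

Lemma D0_zero n : D0 n = 0.
Proof.
have LD : Lop D0 D1 D2 D3 = szero F by rewrite /D0 /D1 /D2 /D3 Lop_lin EqG' EqR; pw k; rewrite /szero; ring.
elim/ltn_ind: n => n IH.
have v0 : vz D0 n by [].
have [v1 e1] := vanish_step (relD relG1 rel1) v0.
have [v2 e2] := vanish_step (relD relG2 rel2) v1.
have [v3 e3] := vanish_step (relD relG3 rel3) v2.
case: n IH v0 v1 v2 v3 e1 e2 e3 => [|m] IH v0 v1 v2 v3 e1 e2 e3.
  rewrite /D0 /sadd /sscale /G0 /R0 fcomp0 /Bm /fmul !big_ord1 /= /Fh /hyp32 /sig.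
  rewrite /fbinom !gbin0 /poch !big_ord0 !expr0 fact0 /= !mul1r invr1 mulr1; ring.
set n := m.+1.
have := congr1 (fun f => f n) LD; rewrite /Lop /szero.
set PD := sadd D3 (sadd (sscale (s1 A) D2) (sscale (s2 A be) D1)).
set QD := sadd D3 (sadd (sscale (q2 A) D2) (sadd (sscale (q1 A) D1) (sscale (q0 A) D0))).
rewrite {1}/sadd {1}/sscale.
have vP : vz PD n by apply: vz_sadd => //; apply: vz_sadd; exact: vz_sscale.
have vQ : vz QD n.
  apply: vz_sadd => //; apply: vz_sadd; first exact: vz_sscale.
  by apply: vz_sadd; exact: vz_sscale.
have [_ ->] := vz_mulX vQ.
have [vP1 eP1] := vz_p1 (-4) vP.
have [vP2 eP2] := vz_p1 (-4) vP1.
have [vP3 eP3] := vz_p1 (-4) vP2.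
have e1' : D1 n = n%:R * D0 n := e1.
have e2' : D2 n = n%:R * D1 n := e2.
have e3' : D3 n = n%:R * D2 n := e3.
rewrite /m4 eP3 eP2 eP1 /PD /sadd /sscale e3' e2' e1' mulr0 addr0.
move=> h; apply/eqP; move: (Pnz m) => hz.
have : (n%:R ^+ 3 + s1 A * n%:R ^+ 2 + s2 A be * n%:R) * D0 n = 0.
  by rewrite -h; ring.
by move/eqP; rewrite mulf_eq0 (negbTE hz).
Qed.

Theorem bailey : fcomp Fh g = fmul (fbinom A (-4)) sig.
Proof.
apply: functional_extensionality => n.
have := D0_zero n; rewrite /D0 /sadd /sscale /G0 /R0 /Bm fbinom_0 // fmul1.
move/eqP; rewrite mulN1r subr_eq0; by move/eqP.
Qed.

End Bailey.

Section Main.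
Variable F : fieldType.
Hypothesis hchar : [pchar F] =i pred0.
Local Notation ps := (fps F).
Local Notation g := (gg F).
Implicit Types X Y Z S T : ps.

Ltac nzconst hc := rewrite ?oner_neq0 ?oppr_eq0 ?(natr_nz hc) //.
Ltac nzc hc H :=
  first [ apply: (nz_by (c:=1) _ _ H); [by nzconst hc | by field; nzconst hc]
        | apply: (nz_by (c:=2) _ _ H); [by nzconst hc | by field; nzconst hc]
        | apply: (nz_by (c:=-2) _ _ H); [by nzconst hc | by field; nzconst hc]
        | apply: (nz_by (c:=-1) _ _ H); [by nzconst hc | by field; nzconst hc]
        | apply: (nz_by (c:=4) _ _ H); [by nzconst hc | by field; nzconst hc]
        | apply: (nz_by (c:=-4) _ _ H); [by nzconst hc | by field; nzconst hc]
        | apply: (nz_by (c:=8) _ _ H); [by nzconst hc | by field; nzconst hc]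
        | apply: (nz_by (c:=-8) _ _ H); [by nzconst hc | by field; nzconst hc]
        | apply: (nz_by (c:=16) _ _ H); [by nzconst hc | by field; nzconst hc]
        | apply: (nz_by (c:=-16) _ _ H); [by nzconst hc | by field; nzconst hc]
        | apply: (nz_by (c:=32) _ _ H); [by nzconst hc | by field; nzconst hc]
        | apply: (nz_by (c:=-32) _ _ H); [by nzconst hc | by field; nzconst hc]
        | apply: (nz_by (c:=3) _ _ H); [by nzconst hc | by field; nzconst hc]
        | apply: (nz_by (c:=6) _ _ H); [by nzconst hc | by field; nzconst hc] ].
Ltac nz1 hc := first [ by nzconst hc
  | match goal with H : is_true (?x != 0) |- _ => nzc hc H end ].
Ltac nzall hc := repeat (apply/andP; split); nz1 hc.

Lemma pochSl (c : F) n : poch c n.+1 = c * poch (c + 1) n.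
Proof.
rewrite /poch big_ord_recl /= addr0; congr (_ * _); apply: eq_bigr => i _.
rewrite /bump /= natrD; ring.
Qed.

Lemma hyp32_rot (x y z l m : F) : hyp32 x y z l m = hyp32 z x y l m.
Proof. apply: functional_extensionality => n; rewrite /hyp32; congr (_ / _); ring. Qed.

Definition Sk (k : nat) (a b : F) : ps := fun n : nat => poch a n * poch (1/2 - k%:R - b) n
   * poch (1/2 - k%:R + b) n
   / ((n`!)%:R * poch (3/4 + k%:R/2 + a/2 + b/2) n * poch (3/4 + k%:R/2 + a/2 - b/2) n)
   * Q3 k a b n%:R.

Definition LHSk (k : nat) (a b : F) : ps :=
  fcomp (hyp32 (1/3 + 2 * k%:R/3 + a/3) (2/3 + 2 * k%:R/3 + a/3) (1 + 2 * k%:R/3 + a/3)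
               (3/4 + k%:R/2 + a/2 + b/2) (3/4 + k%:R/2 + a/2 - b/2))
        (fmul (fmonX (-27)) (fbinom (-3) (-4))).

Definition RHSk (k : nat) (a b : F) : ps :=
  fmul (fbinom (-1 - 2 * k%:R) 8) (fmul (fbinom (1 + 2 * k%:R + a) (-4)) (Sk k a b)).

Lemma R0step (A : F) S0 sg : A != 0 ->
  S0 = sadd sg (sscale (A/3)^-1 (th sg)) ->
  p1 8 (fmul (fbinom (-1) 8) (fmul (fbinom (1 + A) (-4)) S0)) =
  sadd (p1 8 (fmul (fbinom A (-4)) sg)) (sscale (A/3)^-1 (p1 (-4) (th (fmul (fbinom A (-4)) sg)))).
Proof.
move=> hc hS.
rewrite -fmul_p1l p1_fbinom // addNr fbinom_0 // fmul1.
set Q := fbinom (A-1) (-4).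
have hBA : fbinom A (-4) = p1 (-4) Q by rewrite /Q p1_fbinom // subrK.
have hBA1 : fbinom (1 + A) (-4) = p1 (-4) (p1 (-4) Q).
  by rewrite /Q !p1_fbinom //; congr fbinom; ring.
have thBA : th (fbinom A (-4)) = sscale (A * -4) (mulX Q) by rewrite th_fbinom.
rewrite th_fmul thBA hBA1 hBA.
do 12 rewrite ?LM1 ?LM2 ?LM3 ?LM4 ?LM5 ?LM6.
congr (fmul Q _); rewrite hS.
pw n; case: n => [|[|[|n]]] /=; field; by rewrite ?hc ?(natr_nz hchar).
Qed.


Lemma Sk0 a b : a != 0 -> Sk 0 a b = sadd (sig a b) (sscale (a/3)^-1 (th (sig a b))).
Proof.
move=> ha; pw n; rewrite /Sk /sig /= mulr0n subr0 mul0r addr0.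
change (sig a b n * (1 + 3 * n%:R / a) = sig a b n + (a / 3)^-1 * (n%:R * sig a b n)).
field; by rewrite ha (natr_nz hchar).
Qed.

Lemma Srel k a b : a != 0 -> (1/2 - k.+1%:R - b) != 0 -> (1/2 - k.+1%:R + b) != 0 ->
  (2 * k.+1%:R + a) != 0 ->
  (forall m : nat, 3/4 + k.+1%:R/2 + a/2 + b/2 + m%:R != 0) ->
  (forall m : nat, 3/4 + k.+1%:R/2 + a/2 - b/2 + m%:R != 0) ->
  Sk k.+1 a b = sadd (sadd (Sk k (a+1) b) (sscale (3/(2 * k.+1%:R + a)) (th (Sk k (a+1) b))))
     (mulX (sadd (sscale (8*(3 - 4*k.+1%:R + a)/(2 * k.+1%:R + a)) (Sk k (a+1) b))
                 (sscale (24/(2 * k.+1%:R + a)) (th (Sk k (a+1) b))))).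
Proof.
move=> ha hb1 hb2 hK hl1 hl2.
have eL1 : 3/4 + k.+1%:R/2 + a/2 + b/2 = 3/4 + k%:R/2 + (a+1)/2 + b/2 :> F by ring.
have eL2 : 3/4 + k.+1%:R/2 + a/2 - b/2 = 3/4 + k%:R/2 + (a+1)/2 - b/2 :> F by ring.
have e1 : 1/2 - k.+1%:R - b + 1 = 1/2 - k%:R - b :> F by ring.
have e2 : 1/2 - k.+1%:R + b + 1 = 1/2 - k%:R + b :> F by ring.
pw n; case: n => [|m].
  rewrite /Sk /= /poch !big_ord0 fact0 /=.
  field; nzall hchar.
rewrite /Sk (pochSl a m) (pochSl (1/2 - k.+1%:R - b) m) (pochSl (1/2 - k.+1%:R + b) m).
rewrite e1 e2 eL1 eL2 !pochS factS natrM.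
rewrite [Q3 k.+1 a b _]/=.
have -> : (m.+1%:R - 1 : F) = m%:R by rewrite mulrSr addrK.
have hl1' := hl1 m; have hl2' := hl2 m; rewrite eL1 in hl1'; rewrite eL2 in hl2'.
have hp1 := poch_nz hl1 m; have hp2 := poch_nz hl2 m; rewrite eL1 in hp1; rewrite eL2 in hp2.
have h5 : (m`!)%:R != 0 :> F by apply: (natr_nz hchar); exact: fact_gt0.
have h6 : (m.+1)%:R != 0 :> F by apply: (natr_nz hchar).
field; nzall hchar.
Qed.


Lemma Shyp k (a : F) S T : (2 * k.+1%:R + a) != 0 ->
  S = sadd (sadd T (sscale (3/(2 * k.+1%:R + a)) (th T)))
     (mulX (sadd (sscale (8*(3 - 4*k.+1%:R + a)/(2 * k.+1%:R + a)) T)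
                 (sscale (24/(2 * k.+1%:R + a)) (th T)))) ->
  p1 (-4) S = sadd (p1 8 (p1 8 T)) (sscale (1/3 + 2 * k%:R/3 + (a+1)/3)^-1
     (sadd (sadd (sscale (8*(-1 - 2 * k%:R)) (mulX (p1 (-4) T)))
                 (sscale (-4*(1 + 2 * k%:R + (a+1))) (mulX (p1 8 T))))
           (p1 8 (p1 (-4) (th T))))).
Proof.
move=> hK ->; pw n; case: n => [|[|[|n]]] /=; field; nzall hchar.
Qed.

Lemma mainLR k : forall a b : F,
  (forall j : nat, (j <= 2 * k)%N -> a + j%:R != 0) ->
  (forall i : nat, (1 <= i <= k)%N -> (1/2 - i%:R - b) * (1/2 - i%:R + b) != 0) ->
  (forall m : nat, 3/4 + k%:R/2 + a/2 + b/2 + m%:R != 0) ->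
  (forall m : nat, 3/4 + k%:R/2 + a/2 - b/2 + m%:R != 0) ->
  LHSk k a b = RHSk k a b.
Proof.
elim: k => [|k IH] a b ha hb hl1 hl2.
  have ha0 : a != 0 by have := ha 0%N (leq0n _); rewrite addr0.
  have hl1' : forall m : nat, 3/4 + a/2 + b/2 + m%:R != 0.
    by move=> m; have := hl1 m; rewrite mulr0n mul0r addr0.
  have hl2' : forall m : nat, 3/4 + a/2 - b/2 + m%:R != 0.
    by move=> m; have := hl2 m; rewrite mulr0n mul0r addr0.
  have hB := bailey hchar hl1' hl2'; rewrite /Fh in hB.
  apply: (@p1_inj F hchar 8).
  rewrite /LHSk /RHSk mulr0n !mulr0 !mul0r !addr0 subr0 hyp32_rot.
  rewrite -/(gg F).
  have -> : (1 + a/3 : F) = a/3 + 1 by ring.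
  have -> : (1/3 + a/3 : F) = (a+1)/3 by ring.
  have -> : (2/3 + a/3 : F) = (a+2)/3 by ring.
  have ha3 : a/3 != 0 by rewrite mulf_neq0 // invr_eq0 (natr_nz hchar).
  rewrite (Lstep hchar) // hB.
  by rewrite (R0step ha0 (Sk0 b ha0)).
have ha0 : a != 0 by have := ha 0%N (leq0n _); rewrite addr0.
have hK : 2 * k.+1%:R + a != 0.
  by have := ha (2 * k.+1)%N (leqnn _); rewrite natrM addrC.
have [hb1 hb2] : (1/2 - k.+1%:R - b != 0) /\ (1/2 - k.+1%:R + b != 0).
  have := hb k.+1 (leqnn _); by rewrite mulf_eq0 negb_or => /andP.
have hl1' : forall m : nat, 3/4 + k%:R/2 + (a+1)/2 + b/2 + m%:R != 0.
  by move=> m; have := hl1 m; have -> : 3/4 + k.+1%:R/2 + a/2 + b/2 = 3/4 + k%:R/2 + (a+1)/2 + b/2 :> F by ring.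
have hl2' : forall m : nat, 3/4 + k%:R/2 + (a+1)/2 - b/2 + m%:R != 0.
  by move=> m; have := hl2 m; have -> : 3/4 + k.+1%:R/2 + a/2 - b/2 = 3/4 + k%:R/2 + (a+1)/2 - b/2 :> F by ring.
have ha' : forall j : nat, (j <= 2 * k)%N -> a + 1 + j%:R != 0.
  move=> j hj; have h : (j.+1 <= 2 * k.+1)%N by lia.
  by have := ha j.+1 h; rewrite mulrS addrA.
have hb' : forall i : nat, (1 <= i <= k)%N -> (1/2 - i%:R - b) * (1/2 - i%:R + b) != 0.
  by move=> i /andP[h1 h2]; apply: hb; rewrite h1 /= ltnW.
have hL := IH (a+1) b ha' hb' hl1' hl2'.
set c := 1/3 + 2 * k%:R/3 + (a+1)/3.
have hc : c != 0.
  have -> : c = (2 * k.+1%:R + a) / 3 by rewrite /c; field; rewrite ?(natr_nz hchar).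
  by rewrite mulf_neq0 // invr_eq0 (natr_nz hchar).
apply: (@p1_inj F hchar 8).
rewrite /RHSk.
have -> : (-1 - 2 * k.+1%:R : F) = (-1 - 2 * k%:R) - 2 by field; rewrite ?(natr_nz hchar).
have -> : (1 + 2 * k.+1%:R + a : F) = (1 + 2 * k%:R + (a+1)) + 1 by field; rewrite ?(natr_nz hchar).
rewrite (Rstep hchar hc (Shyp hK (Srel ha0 hb1 hb2 hK hl1 hl2))).
rewrite -/(RHSk k (a+1) b) -hL /LHSk hyp32_rot -/(gg F).
have -> : (1 + 2 * k.+1%:R/3 + a/3 : F) = c + 1 by rewrite /c; field; rewrite ?(natr_nz hchar).
have -> : (1/3 + 2 * k.+1%:R/3 + a/3 : F) = 2/3 + 2 * k%:R/3 + (a+1)/3 by field; rewrite ?(natr_nz hchar).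
have -> : (2/3 + 2 * k.+1%:R/3 + a/3 : F) = 1 + 2 * k%:R/3 + (a+1)/3 by field; rewrite ?(natr_nz hchar).
have -> : 3/4 + k.+1%:R/2 + a/2 + b/2 = 3/4 + k%:R/2 + (a+1)/2 + b/2 :> F by field; rewrite ?(natr_nz hchar).
have -> : 3/4 + k.+1%:R/2 + a/2 - b/2 = 3/4 + k%:R/2 + (a+1)/2 - b/2 :> F by field; rewrite ?(natr_nz hchar).
by rewrite (Lstep hchar).
Qed.

End Main.

Section Poly.
Variable F : fieldType.
Hypothesis hchar : [pchar F] =i pred0.

Lemma natr_nzP n : (0 < n)%N -> (n%:R : F) != 0.
Proof. by rewrite ((pcharf0P F).1 hchar) -lt0n. Qed.

Lemma nz_byP (x y c : F) : c != 0 -> x = c * y -> y != 0 -> x != 0.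
Proof. by move=> hc -> hy; rewrite mulf_neq0. Qed.

Ltac nzconst hc := rewrite ?oner_neq0 ?oppr_eq0 ?natr_nzP //.
Ltac nzc hc H :=
  first [ apply: (nz_byP (c:=1) _ _ H); [by nzconst hc | by field; nzconst hc]
        | apply: (nz_byP (c:=2) _ _ H); [by nzconst hc | by field; nzconst hc]
        | apply: (nz_byP (c:=-2) _ _ H); [by nzconst hc | by field; nzconst hc]
        | apply: (nz_byP (c:=-1) _ _ H); [by nzconst hc | by field; nzconst hc]
        | apply: (nz_byP (c:=4) _ _ H); [by nzconst hc | by field; nzconst hc]
        | apply: (nz_byP (c:=-4) _ _ H); [by nzconst hc | by field; nzconst hc]
        | apply: (nz_byP (c:=8) _ _ H); [by nzconst hc | by field; nzconst hc]
        | apply: (nz_byP (c:=-8) _ _ H); [by nzconst hc | by field; nzconst hc]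
        | apply: (nz_byP (c:=16) _ _ H); [by nzconst hc | by field; nzconst hc]
        | apply: (nz_byP (c:=-16) _ _ H); [by nzconst hc | by field; nzconst hc]
        | apply: (nz_byP (c:=32) _ _ H); [by nzconst hc | by field; nzconst hc]
        | apply: (nz_byP (c:=-32) _ _ H); [by nzconst hc | by field; nzconst hc]
        | apply: (nz_byP (c:=3) _ _ H); [by nzconst hc | by field; nzconst hc]
        | apply: (nz_byP (c:=6) _ _ H); [by nzconst hc | by field; nzconst hc] ].
Ltac nz1 hc := first [ by nzconst hc
  | match goal with H : is_true (?x != 0) |- _ => nzc hc H end ].
Ltac nzall hc := repeat (apply/andP; split); nz1 hc.


Lemma size_mulXc (P : {poly F}) c : P != 0 -> size (P * ('X + c%:P)) = (size P).+1.
Proof.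
move=> hP; rewrite size_mul ?size_XaddC //; first by rewrite addn2.
by rewrite -size_poly_eq0 size_XaddC.
Qed.

Lemma lead_mulXc (P : {poly F}) c : lead_coef (P * ('X + c%:P)) = lead_coef P.
Proof. by rewrite lead_coefM lead_coefXaddC mulr1. Qed.

Lemma Xc_nz (c : F) : 'X + c%:P != 0.
Proof. by rewrite -size_poly_eq0 size_XaddC. Qed.

Lemma size_add_eq (p q : {poly F}) n : size p = n.+1 -> size q = n.+1 ->
  lead_coef p + lead_coef q != 0 -> size (p + q) = n.+1.
Proof.
move=> hp hq hl; apply/eqP; rewrite eqn_leq; apply/andP; split.
  by apply: leq_trans (size_polyD _ _) _; rewrite hp hq maxnn.
rewrite leqNgt; apply/negP => hs; move: hl.
by rewrite /lead_coef hp hq -coefD nth_default ?eqxx // -ltnS.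
Qed.

Lemma poly_Q3 k : forall a b : F,
  (forall j : nat, (j <= 2 * k)%N -> a + j%:R != 0) ->
  (forall i : nat, (1 <= i <= k)%N -> (1/2 - i%:R - b) * (1/2 - i%:R + b) != 0) ->
  exists p : {poly F}, size p = (4 * k + 2)%N /\ forall n : F, p.[n] = Q3 k a b n.
Proof.
elim: k => [|k IH] a b ha hb.
  have ha0 : a != 0 by have := ha 0%N (leq0n _); rewrite addr0.
  exists ((3/a)%:P * ('X + (a/3)%:P)); split.
    rewrite size_Cmul ?size_XaddC //.
    by rewrite mulf_neq0 // ?invr_eq0 // natr_nzP.
  move=> n; rewrite !hornerE /=; field.
  by rewrite ha0 natr_nzP.
have ha' : forall j : nat, (j <= 2 * k)%N -> a + 1 + j%:R != 0.
  move=> j hj; have h : (j.+1 <= 2 * k.+1)%N by lia.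
  by have := ha j.+1 h; rewrite mulrS addrA.
have hb' : forall i : nat, (1 <= i <= k)%N -> (1/2 - i%:R - b) * (1/2 - i%:R + b) != 0.
  by move=> i /andP[h1 h2]; apply: hb; rewrite h1 /= ltnW.
have [p' [hs hp]] := IH (a+1) b ha' hb'.
have ha0 : a != 0 by have := ha 0%N (leq0n _); rewrite addr0.
have hK : 2 * k.+1%:R + a != 0.
  by have := ha (2 * k.+1)%N (leqnn _); rewrite natrM addrC.
have [hb1 hb2] : (1/2 - k.+1%:R - b != 0) /\ (1/2 - k.+1%:R + b != 0).
  have := hb k.+1 (leqnn _); by rewrite mulf_eq0 negb_or => /andP.
set K : F := k.+1%:R.
set C := ((2 * K + a) * a * (1/2 - K - b) * (1/2 - K + b))^-1.
set T1 := 3%:P * (p' * ('X + ((2 * K + a)/3)%:P) * ('X + a%:P) * ('X + (1/2 - K - b)%:P)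
                 * ('X + (1/2 - K + b)%:P)).
set T2 := 24%:P * ((p' \Po ('X - 1%:P)) * ('X + ((a - 4 * K)/3)%:P) * ('X + 0%:P)
                 * ('X + (-1/4 + K/2 + a/2 + b/2)%:P) * ('X + (-1/4 + K/2 + a/2 - b/2)%:P)).
exists (C%:P * (T1 + T2)); split.
  have hp0 : p' != 0 by rewrite -size_poly_eq0 hs addn2.
  have hq : size (p' \Po ('X - 1%:P)) = size p'.
    by rewrite size_comp_poly2 // -polyCN size_XaddC.
  have hq0 : p' \Po ('X - 1%:P) != 0 by rewrite -size_poly_eq0 hq hs addn2.
  have h3 : (3 : F) != 0 by rewrite natr_nzP.
  have h24 : (24 : F) != 0 by rewrite natr_nzP.
  have sT1 : size T1 = (4 * k.+1 + 1).+1.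
    rewrite /T1 size_Cmul // !size_mulXc ?hs //; first by lia.
    all: try by rewrite !mulf_neq0 ?Xc_nz.
  have sT2 : size T2 = (4 * k.+1 + 1).+1.
    rewrite /T2 size_Cmul // !size_mulXc ?hq ?hs //; first by lia.
    all: try by rewrite !mulf_neq0 ?Xc_nz.
  have lT1 : lead_coef T1 = 3 * lead_coef p' by rewrite /T1 lead_coefM lead_coefC !lead_mulXc.
  have lT2 : lead_coef T2 = 24 * lead_coef p'.
    rewrite /T2 lead_coefM lead_coefC !lead_mulXc lead_coef_comp.
      by rewrite -polyCN lead_coefXaddC expr1n mulr1.
    by rewrite -polyCN size_XaddC.
  have hC : C != 0.
    by rewrite /C invr_eq0 !mulf_neq0.
  rewrite size_Cmul // (size_add_eq sT1 sT2); first by lia.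
  rewrite lT1 lT2 -mulrDl mulf_neq0 //; last by rewrite lead_coef_eq0.
  have -> : (3 + 24 : F) = 27%:R by rewrite -natrD.
  exact: natr_nzP.
move=> n; rewrite /T1 /T2 !hornerE horner_comp !hornerE !hp /= -/K.
rewrite /C; field; nzall hchar.
Qed.

End Poly.

Theorem theorem8 (F : fieldType) (hchar : [pchar F] =i pred0)
  (k : nat) (a b : F)
  (ha : forall j : nat, (j <= 2 * k)%N -> a + j%:R != 0)
  (hb : forall i : nat, (1 <= i <= k)%N ->
          (1/2 - i%:R - b) * (1/2 - i%:R + b) != 0)
  (hl1 : forall m : nat, 3/4 + k%:R/2 + a/2 + b/2 + m%:R != 0)
  (hl2 : forall m : nat, 3/4 + k%:R/2 + a/2 - b/2 + m%:R != 0) :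
  (exists p : {poly F}, size p = (4 * k + 2)%N /\
      forall n : F, p.[n] = Q3 k a b n)
  /\
  (forall N : nat,
     fcomp (hyp32 (1/3 + 2 * k%:R/3 + a/3) (2/3 + 2 * k%:R/3 + a/3)
                  (1 + 2 * k%:R/3 + a/3)
                  (3/4 + k%:R/2 + a/2 + b/2) (3/4 + k%:R/2 + a/2 - b/2))
           (fmul (fmonX (-27)) (fbinom (-3) (-4))) N
     = fmul (fbinom (-1 - 2 * k%:R) 8)
         (fmul (fbinom (1 + 2 * k%:R + a) (-4))
            (fun n : nat => poch a n * poch (1/2 - k%:R - b) n
                              * poch (1/2 - k%:R + b) n
                 / ((n`!)%:R * poch (3/4 + k%:R/2 + a/2 + b/2) n
                             * poch (3/4 + k%:R/2 + a/2 - b/2) n)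
                 * Q3 k a b n%:R)) N).
Proof.
split; first exact: (poly_Q3 hchar ha hb).
move=> N.
have h := mainLR hchar ha hb hl1 hl2.
exact: (f_equal (fun f => f N) h).
Qed.
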